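(* Each of the following posets has the Möbius uncertainty property: (i) the set $\mathbb{N}$ of positive integers ordered by divisibility; (ii) the set $\mathscr{F}(\mathbb{N})$ of finite subsets of $\mathbb{N}$ ordered by inclusion; (iii) the set $\mathscr{V}(\mathbb{F}_q^\infty)$ of finite-dimensional subspaces of $\mathbb{F}_q^\infty$ ordered by inclusion, for a finite field $\mathbb{F}_q$. Here a locally finite poset $P$ with minimum element has the Möbius uncertainty property if whenever $f,g:P\to\mathbb{C}$ are functions, neither identically zero, with $g(z)=\sum_{x\leqslant z} f(x)$ for all $z\in P$, at least one of $\operatorname{supp}(f)=\{x: f(x)\neq0\}$ and $\operatorname{supp}(g)=\{x: g(x)\neq 0\}$ is infinite.
   Context: $\mathbb{F}_q^\infty$ denotes the countably-infinite-dimensional vector space over $\mathbb{F}_q$ (finitely supported sequences over $\mathbb{F}_q$). All three posets are locally finite with a minimum element ($1$, $\emptyset$, $\{0\}$ respectively). *)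

(* Defs.v *)
From HB Require Import structures.
From mathcomp Require Import all_boot all_order all_algebra.
From mathcomp Require Import finmap.
From mathcomp Require Import boolp classical_sets functions cardinality fsbigop.
From mathcomp Require Import reals.
From mathcomp Require Import complex.

Set Implicit Arguments.
Unset Strict Implicit.
Unset Printing Implicit Defensive.
Import Order.TTheory GRing.Theory Num.Theory.

Local Open Scope classical_set_scope.
Local Open Scope ring_scope.

Definition supp (T : Type) (K : nzRingType) (h : T -> K) : set T :=
  [set x | h x != 0].

(* The sum over {x | x <= z} is the finitely-supported sum of fsbigop; the
   down-sets of the posets considered are finite, so it is the usual sum. *)
Definition mobius_uncertainty (R : realType) (T : choiceType)
    (le : T -> T -> Prop) : Prop :=
  forall f g : T -> R[i],
    (exists x, f x != 0) -> (exists x, g x != 0) ->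
    (forall z, g z = \sum_(x \in [set x | le x z]) f x) ->
    infinite_set (supp f) \/ infinite_set (supp g).

Definition posnat := {n : nat | (0 < n)%N}.
Definition pos_dvd (m n : posnat) : Prop := (val m %| val n)%N.

Definition fsub_incl (A B : {fset posnat}) : Prop := (A `<=` B)%fset.

(* (iii) finite-dimensional subspaces of F^\infty (finitely supported
   sequences nat -> F), ordered by inclusion. *)
Section Subspaces.
Variable F : finFieldType.

Definition fin_supported (v : nat -> F) : Prop :=
  exists N : nat, forall i : nat, (N <= i)%N -> v i = 0.

Definition span_of (s : seq (nat -> F)) : set (nat -> F) :=
  [set v | exists c : 'I_(size s) -> F,
     v = (fun i => \sum_(k < size s) c k * nth (fun _ => 0) s k i)].

Definition fd_subspace (S : set (nat -> F)) : Prop :=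
  exists s : seq (nat -> F),
    (forall k, (k < size s)%N -> fin_supported (nth (fun _ => 0) s k)) /\
    S = span_of s.

Record fdsub := FDSub { fdset : set (nat -> F); fdsetP : fd_subspace fdset }.

HB.instance Definition _ := gen_eqMixin fdsub.
HB.instance Definition _ := gen_choiceMixin fdsub.

Definition fdsub_incl (U V : fdsub) : Prop := fdset U `<=` fdset V.
End Subspaces.

(* Main.v *)
Require Import Defs.
From HB Require Import structures.
From mathcomp Require Import all_boot all_order all_algebra.
From mathcomp Require Import finmap.
From mathcomp Require Import boolp classical_sets functions cardinality fsbigop.
From mathcomp Require Import reals.
From mathcomp Require Import complex.

Set Implicit Arguments.
Unset Strict Implicit.
Unset Printing Implicit Defensive.
Import Order.TTheory GRing.Theory Num.Theory.
Local Open Scope classical_set_scope.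
Local Open Scope ring_scope.

Lemma bound_lem (T : eqType) (P : nat -> T -> Prop) (A : set T) :
  (forall N N' x, (N <= N')%N -> P N x -> P N' x) -> finite_set A ->
  (forall x, A x -> exists N, P N x) -> exists N, forall x, A x -> P N x.
Proof.
move=> mono /finite_seqP [s ->]; elim: s => [|a s IH] H.
  by exists 0%N => x.
have [Na Pa] := H a (mem_head a s).
have [Ns Ps] := IH (fun x xs => H x (introT orP (or_intror xs))).
exists (maxn Na Ns) => x /=; rewrite inE => /orP [/eqP -> | xs].
  by apply: mono Pa; apply: leq_maxl.
by apply: (mono Ns); [apply: leq_maxr | apply: Ps].
Qed.

Lemma minimal_lem (T : eqType) (le : T -> T -> Prop) (s : seq T) a :
  (forall x y z, le x y -> le y z -> le x z) ->
  (forall x y, le x y -> le y x -> x = y) -> a \in s ->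
  exists2 m, m \in s & forall x, x \in s -> le x m -> x = m.
Proof.
move=> tr anti; elim: s a => [|b s IH] a //.
case: s IH => [|c s] IH _.
  by exists b; rewrite ?mem_head // => x; rewrite inE => /eqP.
have [m ms mmin] := IH c (mem_head c s).
case: (pselect (le b m)) => bm.
  exists b; first exact: mem_head.
  move=> x; rewrite inE => /orP [/eqP -> //| xs] xb.
  have xm := mmin x xs (tr _ _ _ xb bm); subst x.
  by apply: anti.
exists m; first by rewrite inE ms orbT.
move=> x; rewrite inE => /orP [/eqP -> | xs] xm; first by [].
exact: mmin.
Qed.

Lemma main_gen (R : realType) (T : choiceType) (le : T -> T -> Prop)
  (P : nat -> T -> Prop) :
  (forall x y z, le x y -> le y z -> le x z) ->
  (forall x y, le x y -> le y x -> x = y) ->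
  (forall N N' x, (N <= N')%N -> P N x -> P N' x) ->
  (forall x, exists N, P N x) ->
  (forall N m n, P N m -> exists z, [/\ le m z, ~ P n z &
        forall x, P N x -> le x z -> le x m]) ->
  mobius_uncertainty R le.
Proof.
move=> tr anti mono Pex ext f g [x0 fx0] _ gE.
case: (pselect (finite_set (supp f))) => [finf|]; last by left.
right => fing.
have [N HN] := bound_lem mono finf (fun x _ => Pex x).
have [s sE] := (finite_seqP _).1 finf.
have mems x : supp f x -> x \in s by rewrite sE.
have x0s : x0 \in s by apply: mems.
have [m ms mmin] := minimal_lem tr anti x0s.
have fm : supp f m by rewrite sE.
have [n Hn] := bound_lem mono fing (fun x _ => Pex x).
have [z [mz nPz Hz]] := ext N m n (HN m fm).
apply: nPz; apply: Hn.
rewrite /supp /= gE -(fsbig_widen [set m]) ?fsbig_set1 //.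
  by move=> x ->.
move=> x [lxz xnm] /=; case: (eqVneq (f x) 0) => // fx.
exfalso; apply: xnm; apply: mmin; first exact: mems.
by apply: Hz => //; apply: HN.
Qed.

Lemma part_i (R : realType) : mobius_uncertainty R pos_dvd.
Proof.
apply: (@main_gen R _ pos_dvd (fun N (x : posnat) => (val x < N)%N)).
- move=> x y z; rewrite /pos_dvd; exact: dvdn_trans.
- move=> [x xp] [y yp]; rewrite /pos_dvd /= => h1 h2; apply: val_inj => /=.
  by apply/eqP; rewrite eqn_dvd h1 h2.
- by move=> N N' x le1 h; apply: leq_trans le1.
- by move=> x; exists (val x).+1.
move=> N [m mp] n /= mN.
have [p pbig pr] := prime_above (maxn N n).
have zp : (0 < m * p)%N by rewrite muln_gt0 mp prime_gt0.
exists (exist _ (m * p)%N zp); split => /=.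
- by rewrite /pos_dvd /= dvdn_mulr.
- move=> h; have : (p <= m * p)%N by apply: leq_pmull.
  move=> h2; have := leq_ltn_trans h2 h.
  by rewrite ltnNge (leq_trans (leq_maxr N n)) // ltnW.
- move=> [x xp] /= xN; rewrite /pos_dvd /= => xd.
  rewrite -(Gauss_dvdl m (p := p)) //.
  rewrite coprime_sym prime_coprime //; apply/negP => /(dvdn_leq xp) px.
  have h := leq_trans (leq_maxl N n) (ltnW (leq_trans pbig px)).
  by rewrite ltnNge h in xN.
Qed.

Lemma part_ii (R : realType) : mobius_uncertainty R fsub_incl.
Proof.
apply: (@main_gen R _ fsub_incl
   (fun N (A : {fset posnat}) => forall y, y \in A -> (val y < N)%N)).
- move=> x y z; rewrite /fsub_incl => h1 h2; exact: fsubset_trans h1 h2.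
- move=> x y; rewrite /fsub_incl => h1 h2; apply/eqP; by rewrite eqEfsubset h1 h2.
- by move=> N N' x le1 h y /h yN; apply: leq_trans le1.
- move=> A.
  have := @bound_lem _ (fun N (y : posnat) => (val y < N)%N) [set y | y \in A].
  case.
  + by move=> N N' x le1 h; apply: leq_trans le1.
  + by apply/finite_seqP; exists A.
  + by move=> x _; exists (val x).+1.
  by move=> N HN; exists N => y /HN.
move=> N m n mN.
have qp : (0 < (maxn N n).+1)%N by [].
pose q : posnat := exist (fun k => is_true (0 < k)%N) _ qp.
exists (m `|` [fset q])%fset; split.
- by rewrite /fsub_incl fsubsetUl.
- move=> h; have := h q; rewrite in_fsetU in_fset1 eqxx orbT /= => /(_ isT).
  by rewrite /q /= ltnNge (leq_trans (leq_maxr N n)) // ltnW.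
- move=> x xN; rewrite /fsub_incl => /fsubsetP xz; apply/fsubsetP => y yx.
  have := xz y yx; rewrite in_fsetU in_fset1 => /orP [//| /eqP yq].
  have := xN y yx; rewrite yq /= ltnNge => /negP; case.
  by apply: leq_trans (leq_maxl N n) _.
Qed.

Section P3.
Variable F : finFieldType.

Definition Pb N (U : fdsub F) : Prop :=
  forall v, fdset U v -> forall i, (N <= i)%N -> v i = 0.

Lemma Pb_ex (U : fdsub F) : exists N, Pb N U.
Proof.
case: U => S [s [hs SE]].
have := @bound_lem _ (fun N (k : 'I_(size s)) =>
   forall i, (N <= i)%N -> nth (fun _ => 0) s k i = 0) setT.
case.
- by move=> N N' x le1 h i le2; apply: h; apply: leq_trans le2.
- exact: finite_finset.
- move=> k _; have [N HN] := hs k (ltn_ord k).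
  by exists N.
move=> N HN; exists N => v /=; rewrite SE => -[c ->] i Ni.
by rewrite big1 // => k _; rewrite HN // mulr0.
Qed.

Definition ee (q : nat) : nat -> F := fun i => if i == q then 1 else 0.

Lemma span_cons (s : seq (nat -> F)) e v :
  span_of (e :: s) v <->
  exists c0, exists2 u, span_of s u & v = (fun i => c0 * e i + u i).
Proof.
split.
- move=> [c ->]; exists (c ord0);
    exists (fun i => \sum_(k < size s) c (lift ord0 k) * nth (fun _ => 0) s k i).
    by exists (fun k => c (lift ord0 k)).
  by apply: funext => i; rewrite big_ord_recl.
- move=> [c0 [u [c ->] ->]].
  exists (fun k : 'I_(size s).+1 => if unlift ord0 k is Some k' then c k' else c0).
  apply: funext => i; rewrite big_ord_recl /= unlift_none; congr (_ + _).
  by apply: eq_bigr => k _; rewrite liftK.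
Qed.

Lemma part_iii_gen (R : realType) : mobius_uncertainty R (@fdsub_incl F).
Proof.
apply: (@main_gen R _ (@fdsub_incl F) Pb).
- move=> x y z; rewrite /fdsub_incl => h1 h2; exact: subset_trans h1 h2.
- move=> [S1 p1] [S2 p2]; rewrite /fdsub_incl /= => h1 h2.
  have E : S1 = S2 by apply/seteqP; split.
  subst S2; by rewrite (Prop_irrelevance p1 p2).
- by move=> N N' x le1 h v /h hv i le2; apply: hv; apply: leq_trans le2.
- exact: Pb_ex.
move=> N [S Sp] n mN; case: (Sp) => s [hs SE].
pose q := maxn N n.
have pf : fd_subspace (span_of (ee q :: s)).
  exists (ee q :: s); split => //; case => [|k] /= ks.
    by exists q.+1 => i qi; rewrite /ee; case: eqP => // iq; rewrite iq ltnn in qi.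
  exact: hs.
exists (FDSub pf); split.
- rewrite /fdsub_incl /= SE => v vs; apply/span_cons; exists 0; exists v => //.
  by apply: funext => i; rewrite mul0r add0r.
- move=> h; have := h (ee q) => /(_ _ q (leq_maxr N n)) => h1.
  have : (1 : F) != 0 := oner_neq0 F.
  rewrite -{1}h1 /ee ?eqxx //.
  apply/span_cons; exists 1; exists (fun _ => 0).
    by exists (fun _ => 0); apply: funext => i; rewrite big1 // => k _; rewrite mul0r.
  by apply: funext => i; rewrite mul1r addr0.
- move=> x xN; rewrite /fdsub_incl /= => xz v xv.
  have [c0 [u us vE]] := (span_cons _ _ _).1 (xz v xv).
  have vq : v q = 0 by apply: xN => //; apply: leq_maxl.
  have uq : u q = 0 by apply: (mN u); [rewrite /= SE | apply: leq_maxl].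
  have c00 : c0 = 0.
    by move: vq; rewrite vE /ee eqxx uq mulr1 addr0.
  rewrite SE; suff -> : v = u by [].
  by rewrite vE; apply: funext => i; rewrite c00 mul0r add0r.
Qed.
End P3.

Theorem corollary1p3 (R : realType) :
  mobius_uncertainty R pos_dvd /\
  mobius_uncertainty R fsub_incl /\
  (forall F : finFieldType, mobius_uncertainty R (@fdsub_incl F)).
Proof.
split; first exact: part_i.
split; first exact: part_ii.
by move=> F; apply: part_iii_gen.
Qed.
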